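(* Let $\mathbb{F}\in\{\mathbb{R},\mathbb{C}\}$, and let $S\in\mathsf{GL}_m(\mathbb{F})$ and $T\in\mathsf{GL}_n(\mathbb{F})$ be Perron similarities with $m>1$ and $n>1$. Then $\mathcal{C}(S)\otimes\mathcal{C}(T)$ is a proper subset of $\mathcal{C}(S\otimes T)$.
   Context: For $x\in\mathbb{F}^n$, $D_x$ is the diagonal matrix with $(i,i)$-entry $x_i$; $M\ge0$ means every entry of $M$ is a nonnegative real number. $\mathcal{C}(S)=\{x\in\mathbb{F}^n\mid SD_xS^{-1}\ge 0\}$ for $S\in\mathsf{GL}_n(\mathbb{F})$. An invertible $S$ is a Perron similarity if for some $i$ the column $Se_i$ and the row $e_i^\top S^{-1}$ are both entrywise nonnegative or both entrywise nonpositive (real). $\otimes$ is the Kronecker product; for sets $X,Y$ of vectors, $X\otimes Y=\{x\otimes y\mid x\in X,\ y\in Y\}$. *)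

(* Defs.v *)
(* Kronecker product = mxtens.tensmx (real_closed library):
   (A *t B) (i1*p+i2, j1*q+j2) = A i1 j1 * B i2 j2. *)
From HB Require Import structures.
From mathcomp Require Import all_boot all_order all_algebra.
From mathcomp Require Import mxtens complex.
From mathcomp Require Import classical_sets reals.
Set Implicit Arguments. Unset Strict Implicit. Unset Printing Implicit Defensive.
Import Order.TTheory GRing.Theory Num.Theory.
Local Open Scope ring_scope.

(* M >= 0 : every entry is a nonnegative real (in a numFieldType, 0 <= z
   means z is real and nonnegative). *)
Definition mx_nonneg (F : numFieldType) m n (M : 'M[F]_(m, n)) : Prop :=
  forall i j, 0 <= M i j.

Definition Dmx (F : numFieldType) n (x : 'rV[F]_n) : 'M[F]_n := diag_mx x.

Definition Cset (F : numFieldType) n (S : 'M[F]_n) : set 'rV[F]_n :=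
  [set x | mx_nonneg (S *m Dmx x *m invmx S)].

Definition perron_similarity (F : numFieldType) n (S : 'M[F]_n) : Prop :=
  S \in unitmx /\
  exists i : 'I_n,
    ((forall k, 0 <= S k i) /\ (forall k, 0 <= invmx S i k)) \/
    ((forall k, S k i <= 0) /\ (forall k, invmx S i k <= 0)).

Definition kronv (F : numFieldType) m n (x : 'rV[F]_m) (y : 'rV[F]_n)
  : 'rV[F]_(m * n) := x *t y.

Definition kron_set (F : numFieldType) m n (X : set 'rV[F]_m) (Y : set 'rV[F]_n)
  : set 'rV[F]_(m * n) :=
  [set z | exists x y, X x /\ Y y /\ z = kronv x y].

(* Main.v *)
Require Import Defs.
From HB Require Import structures.
From mathcomp Require Import all_boot all_order all_algebra.
From mathcomp Require Import mxtens complex.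
From mathcomp Require Import classical_sets reals.
Import Order.TTheory GRing.Theory Num.Theory.
Local Open Scope ring_scope.
Local Open Scope classical_set_scope.
Set Implicit Arguments. Unset Strict Implicit.

Section Gen.
Variable F : numFieldType.

Lemma conjE n (S M : 'M[F]_n) (d : 'rV[F]_n) k l :
  (S *m diag_mx d *m M) k l = \sum_t S k t * d 0 t * M t l.
Proof. by rewrite mxE; apply: eq_bigr => t _; rewrite mul_mx_diag mxE. Qed.

Lemma one11 m n : (1%:M : 'M[F]_m) *t (1%:M : 'M[F]_n) = 1%:M.
Proof.
apply/matrixP => a b.
case: (mxtens_indexP a) => i j; case: (mxtens_indexP b) => k l.
rewrite tensmxE !mxE (can_eq (@mxtens_indexK m n)) xpair_eqE.
by case: (i == k); case: (j == l); rewrite ?mulr1 ?mulr0.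
Qed.

Lemma inv_tens m n (S : 'M[F]_m) (T : 'M[F]_n) :
  S \in unitmx -> T \in unitmx -> invmx (S *t T) = invmx S *t invmx T.
Proof.
move=> uS uT.
have h : (invmx S *t invmx T) *m (S *t T) = 1%:M.
  by rewrite tensmx_mul !mulVmx // one11.
have uST : (S *t T) \in unitmx.
  by case/mulmx1_unit: h.
by rewrite -[LHS]mul1mx -h -mulmxA mulmxV // mulmx1.
Qed.

Lemma unind0 : mxtens_unindex (0 : 'I_(1*1)) = (0, 0).
Proof. by case: (mxtens_unindex _) => u v; rewrite (ord1 u) (ord1 v). Qed.

Lemma kronvE m n (x : 'rV[F]_m) (y : 'rV[F]_n) a b :
  (x *t y : 'rV_(m * n)) 0 (mxtens_index (a, b)) = x 0 a * y 0 b.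
Proof. by rewrite mxE mxtens_indexK unind0. Qed.

Lemma diag_tens m n (x : 'rV[F]_m) (y : 'rV[F]_n) :
  diag_mx (x *t y : 'rV_(m * n)) = diag_mx x *t diag_mx y.
Proof.
apply/matrixP => a b.
case: (mxtens_indexP a) => i j; case: (mxtens_indexP b) => k l.
rewrite [LHS]mxE kronvE [RHS]mxE !mxtens_indexK /= !mxE.
rewrite (can_eq (@mxtens_indexK m n)) xpair_eqE.
by case: (i == k); case: (j == l); rewrite ?mulr1n ?mulr0n ?mulr0 ?mul0r.
Qed.

Lemma kron_sub m n (S : 'M[F]_m) (T : 'M[F]_n) :
  S \in unitmx -> T \in unitmx ->
  kron_set (Cset S) (Cset T) `<=` Cset (S *t T).
Proof.
move=> uS uT z [x [y [hx [hy ->]]]].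
rewrite /Cset /= /Dmx /kronv diag_tens inv_tens // !tensmx_mul.
move=> a b.
case: (mxtens_indexP a) => i j; case: (mxtens_indexP b) => k l.
rewrite tensmxE; apply: mulr_ge0; [apply: hx | apply: hy].
Qed.

Lemma Cset_add n (S : 'M[F]_n) x y : Cset S x -> Cset S y -> Cset S (x + y).
Proof.
rewrite /Cset /= /Dmx => hx hy k l.
rewrite conjE.
have -> : \sum_t S k t * (x + y) 0 t * invmx S t l =
  \sum_t S k t * x 0 t * invmx S t l + \sum_t S k t * y 0 t * invmx S t l.
  by rewrite -big_split; apply: eq_bigr => t _; rewrite mxE mulrDr mulrDl.
by rewrite -!conjE addr_ge0.
Qed.

Lemma Cset_ones n (S : 'M[F]_n) : S \in unitmx -> Cset S (const_mx 1).
Proof.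
move=> uS; rewrite /Cset /= /Dmx => k l.
have -> : S *m diag_mx (const_mx 1) *m invmx S = S *m invmx S.
  apply/matrixP => a b; rewrite !conjE mxE; apply: eq_bigr => t _.
  by rewrite mxE mulr1.
by rewrite mulmxV // mxE ler0n.
Qed.

Definition ev n (i : 'I_n) : 'rV[F]_n := \row_t (t == i)%:R.
Arguments ev {n}.

Lemma Cset_ev n (S : 'M[F]_n) : perron_similarity S ->
  exists i : 'I_n, Cset S (ev i).
Proof.
case=> uS [i hi]; exists i; rewrite /Cset /= /Dmx => k l.
rewrite conjE; apply: sumr_ge0 => t _; rewrite mxE.
case: eqP => [->|_]; last by rewrite mulr0 mul0r.
rewrite mulr1; case: hi => [[h1 h2]|[h1 h2]].
  exact: mulr_ge0.
exact: mulr_le0.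
Qed.

Lemma other n (i : 'I_n) : (1 < n)%N -> exists k, k != i.
Proof.
move=> hn; case: n i hn => [[]//|n] i hn.
have h : (0 < n)%N by [].
exists (lift i (Ordinal h)); by rewrite eq_sym neq_lift.
Qed.

Lemma main m n (S : 'M[F]_m) (T : 'M[F]_n) :
  (1 < m)%N -> (1 < n)%N ->
  perron_similarity S -> perron_similarity T ->
  kron_set (Cset S) (Cset T) `<` Cset (S *t T).
Proof.
move=> hm hn pS pT.
have uS := pS.1; have uT := pT.1.
have sub := kron_sub uS uT.
split => //.
case: (Cset_ev pS) => i hi; case: (Cset_ev pT) => j hj.
have [k hk] := other i hm; have [l hl] := other j hn.
set z := kronv (ev i) (const_mx 1) + kronv (const_mx 1) (ev j).
have hz : Cset (S *t T) z.
  apply: Cset_add; apply: sub.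
    exists (ev i), (const_mx 1); split; [exact: hi | split; [exact: Cset_ones | by []]].
  by exists (const_mx 1), (ev j); split; [exact: Cset_ones | split; [exact: hj | by []]].
move=> /(_ z hz) [x [y [_ [_ e]]]].
have E a b : z 0 (mxtens_index (a, b)) = x 0 a * y 0 b.
  by rewrite e /kronv kronvE.
have Z a b : z 0 (mxtens_index (a, b)) = (a == i)%:R + (b == j)%:R.
  by rewrite /z /kronv mxE !kronvE !mxE mulr1 mul1r.
have e1 : x 0 k * y 0 l = 0 by rewrite -E Z (negbTE hk) (negbTE hl) addr0.
have e2 : x 0 i * y 0 l = 1 by rewrite -E Z eqxx (negbTE hl) addr0.
have e3 : x 0 k * y 0 j = 1 by rewrite -E Z eqxx (negbTE hk) add0r.
have : (x 0 i * y 0 l) * (x 0 k * y 0 j) = (x 0 i * y 0 j) * (x 0 k * y 0 l).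
  by rewrite mulrACA [RHS]mulrACA (mulrC (y 0 l)).
rewrite e1 e2 e3 mulr0 mulr1 => /eqP; by rewrite oner_eq0.
Qed.
End Gen.

Theorem theorem4p6 (R : realType) :
  (forall (m n : nat) (S : 'M[R]_m) (T : 'M[R]_n),
     (1 < m)%N -> (1 < n)%N ->
     perron_similarity S -> perron_similarity T ->
     kron_set (Cset S) (Cset T) `<` Cset (S *t T))
  /\
  (forall (m n : nat) (S : 'M[R[i]]_m) (T : 'M[R[i]]_n),
     (1 < m)%N -> (1 < n)%N ->
     perron_similarity S -> perron_similarity T ->
     kron_set (Cset S) (Cset T) `<` Cset (S *t T)).
Proof. by split => *; apply: main. Qed.
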